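(* Let $1\le r\le D$, $Y\in\mathbb{Z}$, and $1\le d<D$. Let $c_{1:d}$ be such that $P_\theta(\mathbf{C}_{1:d}=c_{1:d},Z^{(r,D)}=Y)>0$, and let $N^{<}_d,N^{=}_d,N^{>}_d$ be the numbers of $t\le d$ with $c_t={<}Y$, ${=}Y$, ${>}Y$ respectively. Suppose one of the following three conditions holds: (1) $N^{=}_d\ge1$ and $N^{<}_d=r-1$; (2) $N^{=}_d\ge1$ and $N^{>}_d=D-r$; (3) $N^{=}_d=\max\big(r-N^{<}_d,\;D-r-N^{>}_d+1\big)$. Then, conditionally on $\mathbf{C}_{1:d}=c_{1:d}$ and $Z^{(r,D)}=Y$, the variables $Z_1,\dots,Z_D$ are mutually independent. For $t\le d$, $Z_t\sim\operatorname{trunc}_{\mathbb{Z}_{c_t}}f_\theta$. The variables $Z_{d+1},\dots,Z_D$ are i.i.d. with law: - $\operatorname{trunc}_{[Y,\infty)}f_\theta$ under condition (1); - $\operatorname{trunc}_{(-\infty,Y]}f_\theta$ under condition (2); - $f_\theta$ under condition (3). In particular, $Z_{d+1},\dots,Z_D$ do not depend on $Z^{(r,D)}$ beyond $\mathbf{C}_{1:d}$.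
   Context: Let $f_\theta$ be a probability mass function on $\mathbb{Z}$. Let $Z_1,\dots,Z_D\overset{iid}{\sim}f_\theta$, and let $Z^{(r,D)}$ be the $r$-th smallest of them. For each $t$, $C_t\in\{{<}Y,{=}Y,{>}Y\}$ records whether $Z_t<Y$, $Z_t=Y$ or $Z_t>Y$. Set $\mathbb{Z}_{<Y}=\{\dots,Y-1\}$, $\mathbb{Z}_{=Y}=\{Y\}$ and $\mathbb{Z}_{>Y}=\{Y+1,\dots\}$. For $S\subseteq\mathbb{Z}$, $\operatorname{trunc}_S f$ denotes $f$ restricted to $S\cap\operatorname{supp}(f)$ and renormalized. *)

(* Defs.v *)
From HB Require Import structures.
From mathcomp Require Import all_boot all_order all_algebra.
From mathcomp Require Import all_classical all_reals all_analysis.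
Set Implicit Arguments. Unset Strict Implicit. Unset Printing Implicit Defensive.
Import Order.TTheory GRing.Theory Num.Theory.
Local Open Scope classical_set_scope.
Local Open Scope ring_scope.

Inductive cmp := CLt | CEq | CGt.

Definition cls (Y x : int) : cmp :=
  if x < Y then CLt else if x == Y then CEq else CGt.

Definition cmp_set (Y : int) (c : cmp) : set int :=
  match c with
  | CLt => [set x | x < Y]
  | CEq => [set Y]
  | CGt => [set x | Y < x]
  end.

Definition is_pmf (R : realType) (f : int -> R) : Prop :=
  (forall x, 0 <= f x) /\ (\esum_(x in setT) (f x)%:E = 1)%E.

Definition mass (R : realType) (f : int -> R) (S : set int) : R :=
  fine (\esum_(x in S) (f x)%:E)%E.

Definition trunc (R : realType) (f : int -> R) (S : set int) : int -> R :=
  fun y => \1_S y * f y / mass f S.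

(* Z^{(r,D)} : the r-th smallest of z_1..z_D  (r is 1-based) *)
Definition order_stat (D : nat) (z : {ffun 'I_D -> int}) (r : nat) : int :=
  nth 0 (sort (fun a b : int => a <= b) [seq z i | i : 'I_D]) r.-1.

(* Law of (Z_1,...,Z_D) iid f : P(A) for A a set of outcomes in Z^D.
   Coordinates Z_1..Z_D are indexed by 'I_D = {0,..,D-1}. *)
Definition Pr (R : realType) (f : int -> R) (D : nat)
  (A : set {ffun 'I_D -> int}) : R :=
  fine (\esum_(z in A) (\prod_(t < D) f (z t))%:E)%E.

Definition condPr (R : realType) (f : int -> R) (D : nat)
  (E A : set {ffun 'I_D -> int}) : R :=
  Pr f (A `&` E) / Pr f E.

(* The conditioning event {C_{1:d} = c_{1:d}, Z^{(r,D)} = Y};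
   c t is the prescribed value of C_{t+1} for t < d. *)
Definition cond_event (D : nat) (Y : int) (r d : nat) (c : nat -> cmp)
  : set {ffun 'I_D -> int} :=
  [set z : {ffun 'I_D -> int} | (forall t : 'I_D, (t < d)%N -> cls Y (z t) = c t)
           /\ order_stat z r = Y].

Definition is_lt (c : cmp) : bool := if c is CLt then true else false.
Definition is_eq (c : cmp) : bool := if c is CEq then true else false.
Definition is_gt (c : cmp) : bool := if c is CGt then true else false.

Definition Nlt (c : nat -> cmp) (d : nat) : nat := count (fun t => is_lt (c t)) (iota 0 d).
Definition Neq (c : nat -> cmp) (d : nat) : nat := count (fun t => is_eq (c t)) (iota 0 d).
Definition Ngt (c : nat -> cmp) (d : nat) : nat := count (fun t => is_gt (c t)) (iota 0 d).

Definition cond_indep_with_laws (R : realType) (f : int -> R) (D : nat)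
  (E : set {ffun 'I_D -> int}) (law : 'I_D -> int -> R) : Prop :=
  (forall z : {ffun 'I_D -> int},
      condPr f E [set z' : {ffun 'I_D -> int} | forall t, z' t = z t]
      = \prod_(t < D) condPr f E [set z' : {ffun 'I_D -> int} | z' t = z t])
  /\ (forall (t : 'I_D) (y : int), condPr f E [set z' : {ffun 'I_D -> int} | z' t = y] = law t y).

Definition mixed_law (R : realType) (f : int -> R) (D : nat) (Y : int)
  (d : nat) (c : nat -> cmp) (g : int -> R) : 'I_D -> int -> R :=
  fun t => if (t < d)%N then trunc f (cmp_set Y (c t)) else g.

Arguments cond_event D Y r d c : clear implicits.
Arguments mixed_law [R] f D Y d c g.

(* Main.v *)
Require Import Defs.
From HB Require Import structures.
From mathcomp Require Import all_boot all_order all_algebra.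
From mathcomp Require Import all_classical all_reals all_analysis.
From mathcomp Require Import zify.
Import Order.TTheory GRing.Theory Num.Theory.
Local Open Scope classical_set_scope.
Local Open Scope ring_scope.

Section SA.




Local Open Scope ereal_scope.

Lemma esumZl (R : realType) (T : choiceType) (S : set T) (a : T -> \bar R) (r : R) :
  (0 <= r)%R -> (forall x, 0 <= a x) ->
  \esum_(i in S) (r%:E * a i) = r%:E * \esum_(i in S) a i.
Proof.
move=> r0 a0; rewrite /esum -ereal_supZl //; last first.
  by apply/set0P; exists 0; exists set0; [exact: fsets_set0|rewrite fsbig_set0].
congr ereal_sup; apply/seteqP; split => x /=.
- case=> A AS <-; exists (\sum_(i \in A) a i); first by exists A.
  by rewrite ge0_mule_fsumr.
- by case=> y [A AS <-] <-; exists A => //; rewrite ge0_mule_fsumr.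
Qed.

Lemma mass_fin (R : realType) (f : int -> R) (S : set int) : is_pmf f ->
  \esum_(x in S) (f x)%:E = (mass f S)%:E.
Proof.
move=> [f0 f1]; rewrite /mass fineK //.
have h0 : 0 <= \esum_(x in S) (f x)%:E by apply: esum_ge0 => x _; rewrite lee_fin.
have h1 : \esum_(x in S) (f x)%:E <= 1.
  rewrite -f1 esum_mkcond; apply: le_esum => x _.
  by case: ifP => _ //; rewrite lee_fin.
by rewrite ge0_fin_numE // (le_lt_trans h1) // ltry.
Qed.




End SA.
Set Implicit Arguments. Unset Strict Implicit.

Definition fcons n (x : int) (w : {ffun 'I_n -> int}) : {ffun 'I_n.+1 -> int} :=
  [ffun i => if unlift ord0 i is Some j then w j else x].
Definition ftail n (z : {ffun 'I_n.+1 -> int}) : {ffun 'I_n -> int} :=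
  [ffun j => z (lift ord0 j)].

Arguments fcons {n}. Arguments ftail {n}.
Lemma fcons0 n x w : @fcons n x w ord0 = x.
Proof. by rewrite ffunE unlift_none. Qed.
Lemma fconsS n x w j : @fcons n x w (lift ord0 j) = w j.
Proof. by rewrite ffunE liftK. Qed.

Lemma prod_esum (R : realType) (f : int -> R) : is_pmf f ->
  forall n (A : 'I_n -> set int),
  (\esum_(z in [set z : {ffun 'I_n -> int} | forall t, A t (z t)])
     (\prod_(t < n) f (z t))%:E = (\prod_(t < n) mass f (A t))%:E)%E.
Proof.
move=> pf; have f0 := pf.1; elim=> [|n IH] A.
  have -> : [set z : {ffun 'I_0 -> int} | forall t, A t (z t)] = [set [ffun i => 0%R]].
    apply/seteqP; split => z /=.
      by move=> _; apply/ffunP => -[].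
    by move=> _ [].
  by rewrite esum_set1 ?big_ord0 // lee_fin big_ord0.
pose A' := fun t : 'I_n => A (lift ord0 t).
rewrite (reindex_esum (A ord0 `*`` (fun _ => [set w : {ffun 'I_n -> int} | forall t, A' t (w t)]))
   _ (fun p => fcons p.1 p.2)); last first.
  split.
  - move=> [x w] /= [Ax Aw] t; case: (unliftP ord0 t) => [j ->|->].
      by rewrite fconsS; apply: Aw.
    by rewrite fcons0.
  - move=> [x w] [x' w'] _ _ /= e.
    have ex : x = x' by rewrite -(fcons0 x w) e fcons0.
    have ew : w = w' by apply/ffunP => j; rewrite -(fconsS x w) e fconsS.
    by rewrite ex ew.
  - move=> z /= Az; exists (z ord0, ftail z).
      by split => //= t; rewrite /A' ffunE; apply: Az.
    apply/ffunP => t; case: (unliftP ord0 t) => [j ->|->].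
      by rewrite fconsS ffunE.
    by rewrite fcons0.
rewrite -(@esum_esum _ _ _ (A ord0) (fun _ => [set w : {ffun 'I_n -> int} | forall t, A' t (w t)]) (fun x w => (\prod_(t < n.+1) f (fcons x w t))%:E)); last first.
  by move=> x w _ _; rewrite lee_fin; apply: prodr_ge0 => t _; apply: f0.
under eq_esum => x _.
  under eq_esum => w _ do rewrite big_ord_recl fcons0 EFinM.
  under eq_esum => w _ do under eq_bigr => j _ do rewrite fconsS.
  rewrite esumZl ?IH //; last by move=> w; rewrite lee_fin; apply: prodr_ge0.
  over.
rewrite /=.
under eq_esum => x _ do rewrite muleC.
rewrite esumZl; last by move=> x; rewrite lee_fin.
  by rewrite mass_fin // -EFinM mulrC big_ord_recl.
by apply: prodr_ge0 => t _; rewrite /mass fine_ge0 // esum_ge0 // => x _; rewrite lee_fin.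
Qed.

Unset Implicit Arguments. Set Strict Implicit.

Set Implicit Arguments. Unset Strict Implicit.

Lemma Pr_prod (R : realType) (f : int -> R) D (A : 'I_D -> set int) : is_pmf f ->
  Pr f [set z : {ffun 'I_D -> int} | forall t, A t (z t)] = \prod_(t < D) mass f (A t).
Proof. by move=> pf; rewrite /Pr prod_esum. Qed.

Lemma mass1 (R : realType) (f : int -> R) (S : set int) y : is_pmf f ->
  mass f (S `&` [set y]) = \1_S y * f y.
Proof.
move=> [f0 _]; rewrite indicE /mass; have [Sy|nSy] := boolP (y \in S).
  have -> : S `&` [set y] = [set y].
    by apply/seteqP; split => x /=; [case=> _ ->|move=> ->; split => //; rewrite -inE].
  by rewrite esum_set1 ?lee_fin // mul1r.
have -> : S `&` [set y] = set0.
  by apply/seteqP; split => x //= [Sx xy]; move: nSy; rewrite -xy; move/negP; apply; apply/mem_set.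
by rewrite esum1 // mul0r.
Qed.

Lemma gen_indep (R : realType) (f : int -> R) D (S : 'I_D -> set int)
  (E : set {ffun 'I_D -> int}) (law : 'I_D -> int -> R) :
  is_pmf f -> E = [set z | forall t, S t (z t)] -> 0 < Pr f E ->
  (forall t y, law t y = trunc f (S t) y) -> cond_indep_with_laws f E law.
Proof.
move=> pf -> PE hlaw.
have PEe := Pr_prod S pf; rewrite PEe in PE.
have m0 : forall t, mass f (S t) != 0.
  move=> t; move: PE; rewrite (bigD1 t) //= => /lt0r_neq0.
  by rewrite mulf_eq0 negb_or => /andP[].
have P0 : \prod_(t < D) mass f (S t) != 0 by apply: lt0r_neq0.
have coord : forall t y, condPr f [set z | forall t, S t (z t)]
    [set z' : {ffun 'I_D -> int} | z' t = y] = \1_(S t) y * f y / mass f (S t).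
  move=> t y; rewrite /condPr PEe.
  have -> : [set z' : {ffun 'I_D -> int} | z' t = y] `&` [set z | forall t, S t (z t)]
      = [set z | forall s, (if s == t then S s `&` [set y] else S s) (z s)].
    apply/seteqP; split => z /=.
      move=> [zy Sz] s; case: eqP => [->|_] //; by split.
    move=> h; split.
      by have := h t; rewrite eqxx => -[].
    move=> s; have := h s; case: eqP => [->|_] //; by case.
  rewrite (Pr_prod (fun s => if s == t then S s `&` [set y] else S s)) // (bigD1 t) //= eqxx mass1 //.
  rewrite [X in _ / X](bigD1 t) //=.
  under eq_bigr => s /negPf st do rewrite st.
  have P1 : \prod_(s < D | s != t) mass f (S s) != 0.
    by move: P0; rewrite (bigD1 t) //= mulf_eq0 negb_or => /andP[].
  by rewrite invfM mulrACA mulfV // mulr1.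
split; last by move=> t y; rewrite coord hlaw.
move=> z; under eq_bigr => t _ do rewrite coord.
rewrite /condPr PEe.
have -> : [set z' : {ffun 'I_D -> int} | forall t, z' t = z t] `&` [set z | forall t, S t (z t)]
      = [set z' | forall s, (S s `&` [set z s]) (z' s)].
  apply/seteqP; split => z' /=.
    by move=> [e Sz] s; split => //; rewrite -(e s).
  by move=> h; split => s; have [] := h s => // _ ->.
rewrite (Pr_prod (fun s => S s `&` [set z s])) // (eq_bigr _ (fun t _ => mass1 (S t) (z t) pf)).
by rewrite -prodfV -big_split.
Qed.

Unset Implicit Arguments. Set Strict Implicit.

Set Implicit Arguments. Unset Strict Implicit.

Lemma sorted_nth_count (s : seq int) (p : pred int) :
  sorted (fun a b : int => a <= b) s ->
  (forall a b, a <= b -> p b -> p a) ->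
  forall i, (i < size s)%N -> p (nth 0 s i) = (i < count p s)%N.
Proof.
move=> + hp; elim: s => [//|x s IH] /= hs.
have ps := path_sorted hs.
have allx := order_path_min (@le_trans _ int) hs.
have h1 : p x = false -> count p s = 0%N.
  move=> px; apply/eqP; rewrite eqn0Ngt -has_count; apply/hasPn => y ys; apply/negP => py.
  by move/allP: allx => /(_ y ys) xy; move: px; rewrite (hp _ _ xy py).
case px: (p x); move=> [|i] /= hi.
- exact: px.
- by rewrite IH.
- rewrite h1 //; exact: px.
- rewrite h1 //=; apply/negbTE/negP => pn.
  have : nth 0 s i \in s by apply: mem_nth.
  move/(allP allx) => xy; by move: px; rewrite (hp _ _ xy pn).
Qed.

Lemma os_char D (z : {ffun 'I_D -> int}) r Y : (1 <= r <= D)%N ->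
  (order_stat z r == Y) =
  (count (fun x : int => (x < Y)%R) [seq z i | i : 'I_D] <= r.-1)%N &&
  (r.-1 < count (fun x : int => (x <= Y)%R) [seq z i | i : 'I_D])%N.
Proof.
move=> /andP[r1 rD]; rewrite /order_stat.
set q := [seq z i | i : 'I_D].
set s := sort _ q.
have ss : sorted (fun a b : int => a <= b) s by apply: sort_sorted => a b; apply: le_total.
have sz : size s = D by rewrite size_sort size_map size_enum_ord.
have hi : (r.-1 < size s)%N by rewrite sz; case: r r1 rD.
have pq : perm_eq s q by apply/permEl/perm_sort.
move/permP: pq => pq; rewrite -!pq.
rewrite leqNgt -(@sorted_nth_count s (fun x : int => (x < Y)%R) ss _ _ hi); last first.
  by move=> a b ab /= bY; apply: le_lt_trans bY.
rewrite -(@sorted_nth_count s (fun x : int => (x <= Y)%R) ss _ _ hi); last first.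
  by move=> a b ab /= bY; apply: le_trans bY.
by rewrite /= -leNgt eq_le andbC.
Qed.

Lemma count_sum D (z : {ffun 'I_D -> int}) (p : pred int) :
  count p [seq z i | i : 'I_D] = (\sum_(i < D | p (z i)) 1)%N.
Proof. by rewrite -sum1_count big_map big_enum_cond. Qed.

Lemma count_iota_sum (P : pred nat) d D : (d <= D)%N ->
  count P (iota 0 d) = (\sum_(i < D | P i && (i < d)) 1)%N.
Proof. move=> dD; rewrite -sum1_count.
have := @big_mkord nat 0%N addn d P (fun _ => 1%N); rewrite /index_iota subn0 => ->.
exact: (@big_ord_widen_cond nat 0%N addn d D P (fun _ => 1%N) dD). Qed.

Lemma sum_split D d (P : pred 'I_D) :
  (\sum_(i < D | P i) 1 = \sum_(i < D | P i && (i < d)) 1 + \sum_(i < D | P i && ~~ (i < d)) 1)%N.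
Proof. by rewrite (bigID (fun i : 'I_D => (i < d)%N)). Qed.

Lemma sum0_iff D (P Q : pred 'I_D) :
  (\sum_(i < D | P i && Q i) 1)%N = 0%N <-> (forall i, Q i -> ~~ P i).
Proof.
split.
  move=> h i qi; apply/negP => pi.
  by move: h; rewrite (bigD1 i) ?pi ?qi.
move=> h; apply: big_pred0 => i; case: (boolP (Q i)) => qi; last by rewrite andbF.
by rewrite (negPf (h i qi)).
Qed.

Lemma count3 (s : seq int) Y :
  (count (fun x : int => (x < Y)%R) s + count (fun x : int => x == Y) s + count (fun x : int => (Y < x)%R) s = size s)%N
  /\ count (fun x : int => (x <= Y)%R) s = (count (fun x : int => (x < Y)%R) s + count (fun x : int => x == Y) s)%N.
Proof.
elim: s => [//|x s [IH1 IH2]] /=; split.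
  case: (ltgtP x Y) => _ /=; lia.
by rewrite IH2 le_eqVlt; case: (ltgtP x Y) => _ /=; lia.
Qed.

Lemma Ncount3 (c : nat -> cmp) d : (Nlt c d + Neq c d + Ngt c d = d)%N.
Proof.
rewrite /Nlt /Neq /Ngt -{4}(size_iota 0 d).
elim: (iota 0 d) => [//|x s IH] /=; case: (c x) => /=; lia.
Qed.

Unset Implicit Arguments. Set Strict Implicit.

Set Implicit Arguments. Unset Strict Implicit.

Lemma cls_iff Y c x : cls Y x = c <-> cmp_set Y c x.
Proof.
rewrite /cls; case: (ltgtP x Y) => h; case: c => /=; split => //.
all: move=> e; first [ by move: (lt_trans h e); rewrite ltxx | by move: (lt_trans e h); rewrite ltxx | by move: h; rewrite e ltxx | by move: e; rewrite h ltxx ].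
Qed.


Lemma counts D r d Y (c : nat -> cmp) (z : {ffun 'I_D -> int}) :
  (d <= D)%N -> (1 <= r <= D)%N ->
  (forall t : 'I_D, (t < d)%N -> cls Y (z t) = c t) ->
  exists Tl Te Tg : nat,
  [/\ (order_stat z r == Y) = (Nlt c d + Tl <= r.-1)%N && (r.-1 < Nlt c d + Tl + Neq c d + Te)%N,
   (Tl + Te + Tg = D - d)%N, (Nlt c d + Neq c d + Ngt c d = d)%N,
   Tl = (\sum_(i < D | (z i < Y)%R && ~~ (i < d)%N) 1)%N &
   Tg = (\sum_(i < D | (Y < z i)%R && ~~ (i < d)%N) 1)%N].
Proof.
move=> dD rD H.
have cE : forall i : 'I_D, (i < d)%N ->
   [/\ is_lt (c i) = (z i < Y)%R, is_eq (c i) = (z i == Y) & is_gt (c i) = (Y < z i)%R].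
  move=> i hi; rewrite -(H i hi) /cls.
  by case: (ltgtP (z i) Y) => h /=; rewrite ?h.
have Hl : (\sum_(i < D | (z i < Y)%R && (i < d)%N) 1)%N = Nlt c d.
  rewrite /Nlt (count_iota_sum _ dD); apply: eq_bigl => i.
  by case: (boolP (i < d)%N) => hi; rewrite ?andbF ?andbT //; have [-> _ _] := cE i hi.
have He : (\sum_(i < D | (z i == Y) && (i < d)%N) 1)%N = Neq c d.
  rewrite /Neq (count_iota_sum _ dD); apply: eq_bigl => i.
  by case: (boolP (i < d)%N) => hi; rewrite ?andbF ?andbT //; have [_ -> _] := cE i hi.
have Hg : (\sum_(i < D | (Y < z i)%R && (i < d)%N) 1)%N = Ngt c d.
  rewrite /Ngt (count_iota_sum _ dD); apply: eq_bigl => i.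
  by case: (boolP (i < d)%N) => hi; rewrite ?andbF ?andbT //; have [_ _ ->] := cE i hi.
have [c3 c2] := count3 [seq z i | i : 'I_D] Y.
rewrite size_map size_enum_ord in c3.
rewrite !count_sum in c3 c2.
rewrite (sum_split d (fun i : 'I_D => (z i < Y)%R)) (sum_split d (fun i : 'I_D => z i == Y))
  (sum_split d (fun i : 'I_D => (Y < z i)%R)) Hl He Hg in c3.
rewrite (sum_split d (fun i : 'I_D => (z i < Y)%R)) (sum_split d (fun i : 'I_D => z i == Y)) Hl He in c2.
exists (\sum_(i < D | (z i < Y)%R && ~~ (i < d)%N) 1)%N,
       (\sum_(i < D | (z i == Y) && ~~ (i < d)%N) 1)%N,
       (\sum_(i < D | (Y < z i)%R && ~~ (i < d)%N) 1)%N.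
have N3 := Ncount3 c d.
split => //; last by lia.
rewrite os_char // !count_sum c2.
rewrite (sum_split d (fun i : 'I_D => (z i < Y)%R)) Hl.
by rewrite !addnA.
Qed.

Unset Implicit Arguments. Set Strict Implicit.

Lemma event_eq D r d Y (c : nat -> cmp) (G : set int) :
  (d <= D)%N -> (1 <= r <= D)%N ->
  (forall z : {ffun 'I_D -> int}, (forall t : 'I_D, (t < d)%N -> cls Y (z t) = c t) ->
     (order_stat z r = Y <-> forall t : 'I_D, ~~ (t < d)%N -> G (z t))) ->
  cond_event D Y r d c =
  [set z | forall t : 'I_D, (if (t < d)%N then cmp_set Y (c t) else G) (z t)].
Proof.
move=> dD rD key; apply/seteqP; split => z /=.
  move=> [H hos] t; case: ifP => ht.
    by apply/cls_iff; apply: H; rewrite ht.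
  by apply: ((key z H).1 hos); rewrite ht.
move=> h.
have H : forall t : 'I_D, (t < d)%N -> cls Y (z t) = c t.
  by move=> t ht; apply/cls_iff; have := h t; rewrite ht.
split => //; apply: (key z H).2 => t ht; have := h t; by rewrite (negPf ht).
Qed.

Theorem theorem5p3 (R : realType) (f : int -> R) (D r d : nat) (Y : int)
  (c : nat -> cmp) :
  is_pmf f ->
  (1 <= r <= D)%N ->
  (1 <= d < D)%N ->
  0 < Pr f (cond_event D Y r d c) ->
  (* condition (1) *)
  (((0 < Neq c d)%N /\ Nlt c d = r.-1) ->
     cond_indep_with_laws f (cond_event D Y r d c)
       (mixed_law f D Y d c (trunc f [set x : int | (Y <= x)%R])))
  /\
  (* condition (2) *)
  (((0 < Neq c d)%N /\ Ngt c d = (D - r)%N) ->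
     cond_indep_with_laws f (cond_event D Y r d c)
       (mixed_law f D Y d c (trunc f [set x : int | (x <= Y)%R])))
  /\
  (* condition (3) *)
  ((Neq c d)%:Z = Num.max (r%:Z - (Nlt c d)%:Z)
                          (D%:Z - r%:Z - (Ngt c d)%:Z + 1) ->
     cond_indep_with_laws f (cond_event D Y r d c)
       (mixed_law f D Y d c f)).
Proof.
move=> pf rD /andP[d1 dD'] PE.
have dD : (d <= D)%N by apply: ltnW.
split; [|split].
- move=> [e1 e2].
  have ev := @event_eq D r d Y c [set x : int | (Y <= x)%R] dD rD.
  rewrite ev in PE *.
  + apply: (@gen_indep R f D (fun t : 'I_D => if (t < d)%N then cmp_set Y (c t) else [set x : int | (Y <= x)%R]) _ _ pf erefl PE) => t y; rewrite /mixed_law; by case: ifP.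
  + move=> z H; have [Tl [Te [Tg [hos h1 h2 eTl eTg]]]] := counts dD rD H.
    have := sum0_iff (fun i : 'I_D => (z i < Y)%R) (fun i : 'I_D => ~~ (i < d)%N).
    rewrite -eTl => s0.
    split.
      move/eqP; rewrite hos; move=> /andP[q1 q2].
      have T0 : Tl = 0%N by lia.
      move=> t ht; have := (proj1 s0 T0 t ht); by rewrite /= -leNgt.
    move=> hall; apply/eqP; rewrite hos.
    have T0 : Tl = 0%N by apply: (proj2 s0) => i hi; rewrite -leNgt; apply: hall.
    apply/andP; split; lia.
- move=> [e1 e2].
  have ev := @event_eq D r d Y c [set x : int | (x <= Y)%R] dD rD.
  rewrite ev in PE *.
  + apply: (@gen_indep R f D (fun t : 'I_D => if (t < d)%N then cmp_set Y (c t) else [set x : int | (x <= Y)%R]) _ _ pf erefl PE) => t y; rewrite /mixed_law; by case: ifP.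
  + move=> z H; have [Tl [Te [Tg [hos h1 h2 eTl eTg]]]] := counts dD rD H.
    have := sum0_iff (fun i : 'I_D => (Y < z i)%R) (fun i : 'I_D => ~~ (i < d)%N).
    rewrite -eTg => s0.
    split.
      move/eqP; rewrite hos; move=> /andP[q1 q2].
      have T0 : Tg = 0%N by lia.
      move=> t ht; have := (proj1 s0 T0 t ht); by rewrite /= -leNgt.
    move=> hall; apply/eqP; rewrite hos.
    have T0 : Tg = 0%N by apply: (proj2 s0) => i hi; rewrite -leNgt; apply: hall.
    apply/andP; split; lia.
- move=> e.
  have m1 : (r%:Z - (Nlt c d)%:Z <= (Neq c d)%:Z)%R by rewrite e le_max lexx.
  have m2 : (D%:Z - r%:Z - (Ngt c d)%:Z + 1 <= (Neq c d)%:Z)%R by rewrite e le_max lexx orbT.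
  have ev := @event_eq D r d Y c [set: int] dD rD.
  rewrite ev in PE *.
  + apply: (@gen_indep R f D (fun t : 'I_D => if (t < d)%N then cmp_set Y (c t) else [set: int]) _ _ pf erefl PE) => t y; rewrite /mixed_law; case: ifP => // _.
    rewrite /trunc indicE in_setT mul1r.
    have -> : mass f [set: int] = 1 by rewrite /mass pf.2.
    by rewrite divr1.
  + move=> z H; have [Tl [Te [Tg [hos h1 h2 eTl eTg]]]] := counts dD rD H.
    split => // _; apply/eqP; rewrite hos; apply/andP; split; lia.
Qed.
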